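(* Let $p_1\ge p_2\ge\cdots\ge p_n$ be positive integers (not necessarily distinct). Let $q_1>q_2>\cdots>q_m$ be the distinct values among $p_1,\dots,p_n$. Then the number of distinct sequences in $\{S_c((p_1,\dots,p_n)) : c\in[0,1]\}$ equals the number of distinct sequences in $\{S_c((q_1,\dots,q_m)) : c\in[0,1]\}$.
   Context: Stationary divisor method with cut point $c\in[0,1]$ for a vote vector $\mathbf v=(v_1,\dots,v_r)$ with $v_1\ge\cdots\ge v_r$: seats are allocated one at a time. Initially each party $i$ has $a_i=0$ seats; each next seat goes to a party $i$ maximizing $v_i/(a_i+c)$, whose $a_i$ then increases by $1$. Ties are broken in favor of the smallest index. For $c=0$ the convention is that $v_i/0>v_j/0$ whenever $v_i>v_j$, ties among equal $v_i/0$ are broken by smallest index, and $v_i/0>v_j/k$ for every $k>0$. $S_c(\mathbf v)$ is the infinite sequence of indices of the parties receiving successive seats. *)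

(* Defs.v *)
From HB Require Import structures.
From mathcomp Require Import all_boot all_order all_algebra.
From mathcomp Require Import boolp classical_sets functions cardinality reals.
Set Implicit Arguments. Unset Strict Implicit. Unset Printing Implicit Defensive.
Import Order.TTheory GRing.Theory Num.Theory.
Local Open Scope ring_scope.

(* Parties are indexed 0..r-1 (index i corresponds to party i+1 of the paper).
   [quot_gt vi di vj dj] : the quotient vi/di is strictly greater than vj/dj,
   with the paper's convention for division by 0 (di = 0 happens only when
   a_i = 0 and c = 0):  vi/0 > vj/0 iff vi > vj;  vi/0 > vj/k for every k > 0. *)
Definition quot_gt (R : realType) (vi : nat) (di : R) (vj : nat) (dj : R) : bool :=
  if di == 0 then (if dj == 0 then (vj < vi)%N else true)
  else if dj == 0 then false else (vj%:R / dj < vi%:R / di).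

Definition next_party (R : realType) (c : R) (v a : seq nat) : nat :=
  let r := size v in
  let d := fun i => (nth 0%N a i)%:R + c in
  find (fun i => all (fun j => ~~ quot_gt (nth 0%N v j) (d j) (nth 0%N v i) (d i))
                     (iota 0 r))
       (iota 0 r).

Definition divisor_step (R : realType) (c : R) (v a : seq nat) : seq nat :=
  incr_nth a (next_party c v a).

Definition seats_after (R : realType) (c : R) (v : seq nat) (k : nat) : seq nat :=
  iter k (divisor_step c v) (nseq (size v) 0%N).

(* S_c(v): the k-th entry (k = 0,1,2,...) is the (0-based) index of the party
   receiving seat number k+1. *)
Definition S_seq (R : realType) (c : R) (v : seq nat) : nat -> nat :=
  fun k => next_party c v (seats_after c v k).

(* Main.v *)
Require Import Defs.
From HB Require Import structures.
From mathcomp Require Import all_boot all_order all_algebra.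
From mathcomp Require Import boolp classical_sets functions cardinality reals.
From mathcomp Require Import zify ring lra.
Set Implicit Arguments. Unset Strict Implicit. Unset Printing Implicit Defensive.
Import Order.TTheory GRing.Theory Num.Theory.
Local Open Scope ring_scope.
Local Open Scope classical_set_scope.
Local Open Scope card_scope.

Lemma card_img_rel (R : realType) (T U : Type) (C : set R) (f : R -> T) (g : R -> U) :
  (forall c c', C c -> C c' -> (f c = f c' <-> g c = g c')) ->
  f @` C #= g @` C.
Proof.
move=> H.
pose h (y : T) : U := g (xget 0 [set c | C c /\ f c = y]).
have hP c : C c -> h (f c) = g c.
  move=> Cc; rewrite /h.
  have [] : [set c0 | C c0 /\ f c0 = f c] (xget 0 [set c0 | C c0 /\ f c0 = f c]).
    by apply: xgetPex; exists c.
  by move=> Cx /(H _ _ Cx Cc).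
have -> : g @` C = h @` (f @` C).
  apply/seteqP; split => y.
    by case=> c Cc <-; exists (f c); [exists c|exact: hP].
  by case=> _ [c Cc <-] <-; exists c => //; rewrite hP.
apply: card_esym; apply: inj_card_eq => _ _ /set_mem[c Cc <-] /set_mem[c' Cc' <-].
by rewrite !hP // => /(H _ _ Cc Cc').
Qed.

Section Beats.
Variable R : realType.
Definition bt (a b : nat * R) := quot_gt a.1 a.2 b.1 b.2.

Lemma bt_irr a : ~~ bt a a.
Proof. by rewrite /bt /quot_gt; case: eqP => _ //; rewrite ?ltnn ?ltxx. Qed.

Lemma bt_trans a b c : bt a b -> bt b c -> bt a c.
Proof.
rewrite /bt /quot_gt.
case: eqP => ha; case: eqP => hb; case: eqP => hc //.
- by move=> h1 h2; apply: ltn_trans h2 h1.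
- by move=> h1 h2; apply: lt_trans h2 h1.
Qed.

Lemma bt_asym a b : bt a b -> ~~ bt b a.
Proof. move=> h; apply/negP => hba; move: (bt_trans h hba); by rewrite (negbTE (bt_irr a)). Qed.

Lemma bt_succ (x : nat) (d : R) : (0 < x)%N -> 0 <= d -> bt (x, d) (x, d + 1).
Proof.
move=> x0 d0; rewrite /bt /quot_gt /=.
have -> : (d + 1 == 0) = false by apply/negbTE; rewrite gt_eqF // ltr_wpDl.
case: eqP => // /eqP dn0.
have dp : 0 < d by rewrite lt_def dn0.
rewrite ltr_pM2l ?ltr0n // ltf_pV2 ?posrE //; first lra.
by rewrite ltr_wpDl.
Qed.
End Beats.
Section Find.
Variable R : realType.
Local Open Scope nat_scope.

Definition ismax (f : nat -> nat * R) r i := all (fun j => ~~ bt (f j) (f i)) (iota 0 r).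

Lemma find_iota_eq (P : pred nat) r i : i < r -> P i -> (forall j, j < i -> ~~ P j) ->
  find P (iota 0 r) = i.
Proof.
move=> ir Pi Hj.
have hs : has P (iota 0 r) by apply/hasP; exists i; rewrite ?mem_iota.
have kl : find P (iota 0 r) < r by move: hs; rewrite has_find size_iota.
have := nth_find 0 hs; rewrite nth_iota // add0n => Pk.
apply/eqP; rewrite eqn_leq; apply/andP; split.
  rewrite leqNgt; apply/negP => ik.
  by have := before_find 0 ik; rewrite nth_iota ?add0n ?Pi // (ltn_trans ik kl).
by rewrite leqNgt; apply/negP => /Hj; rewrite Pk.
Qed.

Lemma find_iota_props (P : pred nat) r : (exists2 i, i < r & P i) ->
  [/\ find P (iota 0 r) < r, P (find P (iota 0 r)) &
      forall j, j < find P (iota 0 r) -> ~~ P j].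
Proof.
case=> i ir Pi.
have hs : has P (iota 0 r) by apply/hasP; exists i; rewrite ?mem_iota.
have kl : find P (iota 0 r) < r by move: hs; rewrite has_find size_iota.
split => //; first by have := nth_find 0 hs; rewrite nth_iota // add0n.
move=> j jk; have jr : j < r by lia.
by have := before_find 0 jk; rewrite nth_iota // add0n => ->.
Qed.

Lemma ex_max (f : nat -> nat * R) r : 0 < r -> exists2 i, i < r & ismax f r i.
Proof.
elim: r => // r IH _.
case: (posnP r) => [->|rp].
  by exists 0 => //; rewrite /ismax /= bt_irr.
have [i ir Mi] := IH rp.
case: (boolP (bt (f r) (f i))) => h.
  exists r => //; rewrite /ismax -addn1 iotaD all_cat /= add0n bt_irr !andbT.
  apply/allP => j; rewrite mem_iota add0n => jr; apply/negP => hj.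
  by move/allP: Mi => /(_ j); rewrite mem_iota add0n jr (bt_trans hj h) => /(_ isT).
exists i; first by rewrite ltnS ltnW.
rewrite /ismax -addn1 iotaD all_cat /= add0n h !andbT; exact: Mi.
Qed.

Lemma next_props (f : nat -> nat * R) r : 0 < r ->
  [/\ find (ismax f r) (iota 0 r) < r, ismax f r (find (ismax f r) (iota 0 r)) &
      forall j, j < find (ismax f r) (iota 0 r) -> ~~ ismax f r j].
Proof. by move=> rp; apply: find_iota_props; apply: ex_max. Qed.

Definition sg (i j : nat) := j - (i < j).
Definition lft (i w : nat) := w + (i < w).

Lemma ismax_sg f' n' i j : i < n' ->
  ismax (fun j => f' (sg i j)) n'.+1 j = ismax f' n' (sg i j).
Proof.
move=> in'; apply/allP/allP => H k.
  rewrite mem_iota add0n => kn.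
  have := H (lft i k); rewrite mem_iota add0n /lft /sg.
  have -> : k + (i < k) - (i < k + (i < k)) = k by case: ltngtP => //=; lia.
  apply; case: (ltnP i k) => /= ?; lia.
rewrite mem_iota add0n => kn; apply: H.
rewrite mem_iota add0n /sg; case: (ltnP i k) => /= ?; lia.
Qed.

Lemma next_bal f' n' i : i < n' ->
  find (ismax (fun j => f' (sg i j)) n'.+1) (iota 0 n'.+1) =
  lft i (find (ismax f' n') (iota 0 n')).
Proof.
move=> in'.
have [wl Mw Bw] := next_props f' (leq_ltn_trans (leq0n i) in').
set w := find _ _ in wl Mw Bw *.
apply: find_iota_eq.
- rewrite /lft; case: (ltnP i w) => /= ?; lia.
- rewrite ismax_sg //; suff -> : sg i (lft i w) = w by [].
  rewrite /sg /lft; case: ltngtP => /=; lia.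
- move=> j jl; rewrite ismax_sg //; apply: Bw.
  move: jl; rewrite /sg /lft; case: ltngtP => /=; case: ltngtP => /=; lia.
Qed.

Lemma next_half (f' : nat -> nat * R) n' i : i < n' -> (0 < (f' i).1) -> (0 <= (f' i).2)%R ->
  find (ismax f' n') (iota 0 n') = i ->
  find (ismax (fun j => if j == i then ((f' i).1, ((f' i).2 + 1)%R) else f' (sg i j)) n'.+1)
    (iota 0 n'.+1) = i.+1.
Proof.
move=> in' x0 d0 wi.
have [wl Mw Bw] := next_props f' (leq_ltn_trans (leq0n i) in').
rewrite wi in wl Mw Bw.
have hb : bt (f' i) ((f' i).1, ((f' i).2 + 1)%R).
  by case: (f' i) x0 d0 => x d /= x0 d0; apply: bt_succ.
have e1 : (i.+1 == i) = false by lia.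
have e2 : sg i i.+1 = i by rewrite /sg ltnSn subn1.
apply: find_iota_eq => //.
- rewrite /ismax e1 e2.
  apply/allP => k; rewrite mem_iota add0n => kn.
  case: eqP => [_|/eqP ki]; first exact: bt_asym.
  move/allP: Mw; apply; rewrite mem_iota add0n /sg.
  case: (ltnP i k) => /= ?; lia.
- move=> j; rewrite ltnS leq_eqVlt => /orP[/eqP ->|ji].
  + apply/negP => /allP /(_ i.+1); rewrite mem_iota add0n ltnS in'.
    by rewrite e1 e2 eqxx hb => /(_ isT).
  + have := Bw _ ji; rewrite /ismax => /allPn [k]; rewrite mem_iota add0n => kn.
    rewrite negbK => hk; apply/allPn; exists (k + (i <= k)).
      rewrite mem_iota add0n; case: (i <= k) => /=; lia.
    have -> : (k + (i <= k) == i) = false by case: (leqP i k) => /=; lia.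
    have -> : (j == i) = false by lia.
    have -> : sg i (k + (i <= k)) = k by rewrite /sg; case: (leqP i k) => /=; case: ltngtP => /=; lia.
    by rewrite /sg (_ : (i < j) = false) ?subn0 ?negbK //; lia.
Qed.
End Find.
Section Lists.
Local Open Scope nat_scope.
Definition dup (i : nat) (s : seq nat) := take i.+1 s ++ drop i s.

Lemma size_dup i s : i < size s -> size (dup i s) = (size s).+1.
Proof. move=> hi; rewrite /dup size_cat size_take size_drop; case: ifP => h; lia. Qed.

Lemma nth_dup i s j : i < size s -> nth 0 (dup i s) j = nth 0 s (sg i j).
Proof.
move=> hi; rewrite /dup nth_cat size_take.
have -> : (if i.+1 < size s then i.+1 else size s) = i.+1 by case: ifP => h; lia.
case: (ltnP j i.+1) => ji.
  rewrite /sg (_ : (i < j) = false); last by apply/negbTE; rewrite -leqNgt.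
  by rewrite nth_take // subn0.
rewrite nth_drop /sg ji; congr nth; rewrite /=; lia.
Qed.

Lemma dup_incr_ne s i w : i < size s -> w < size s -> w != i ->
  dup i (incr_nth s w) = incr_nth (dup i s) (lft i w).
Proof.
move=> hi ws wi.
have hi' : i < size (incr_nth s w) by rewrite size_incr_nth ws.
have hl : lft i w < (size s).+1 by rewrite /lft; case: (ltnP i w) => h /=; lia.
apply: (@eq_from_nth _ 0).
  by rewrite size_dup // !size_incr_nth size_dup // ws hl.
move=> j _; rewrite nth_dup // !nth_incr_nth nth_dup //; congr (_ + _).
rewrite /sg /lft; case: (ltnP i j) => hij; case: (ltnP i w) => hiw /=;
  case: eqP => e1; case: eqP => e2 //; exfalso; lia.
Qed.

Lemma dup_incr_eq s i : i < size s ->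
  dup i (incr_nth s i) = incr_nth (incr_nth (dup i s) i) i.+1.
Proof.
move=> hi.
have hi' : i < size (incr_nth s i) by rewrite size_incr_nth hi.
have h1 : i < (size s).+1 by lia.
have h2 : i.+1 < (size s).+1 by lia.
apply: (@eq_from_nth _ 0).
  by rewrite size_dup // !size_incr_nth size_dup // hi h1 h2.
move=> j _; rewrite nth_dup // !nth_incr_nth nth_dup // addnA; congr (_ + _).
rewrite /sg; case: (ltnP i j) => hij /=.
  by case: eqP => a; case: eqP => b; case: eqP => c' /=; lia.
by case: eqP => a; case: eqP => b; case: eqP => c' /=; lia.
Qed.
End Lists.
Section Sim.
Variable R : realType.
Local Open Scope nat_scope.

Lemma next_partyE2 (c : R) v a (f : nat -> nat * R) :
  (forall j, (nth 0 v j, ((nth 0 a j)%:R + c)%R) = f j) ->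
  next_party c v a = find (ismax f (size v)) (iota 0 (size v)).
Proof.
move=> H; rewrite /next_party /ismax /bt; congr find.
apply: funext => k; congr all; apply: funext => j; by rewrite -!H.
Qed.

Lemma next_lt (c : R) v a : 0 < size v -> next_party c v a < size v.
Proof.
move=> h; rewrite (next_partyE2 (f := fun j => (nth 0 v j, ((nth 0 a j)%:R + c)%R))) //.
by case: (next_props (fun j => (nth 0 v j, ((nth 0 a j)%:R + c)%R)) h).
Qed.

Lemma seatsS (c : R) v n : seats_after c v n.+1 = divisor_step c v (seats_after c v n).
Proof. by []. Qed.

Lemma size_seats (c : R) v k : 0 < size v -> size (seats_after c v k) = size v.
Proof.
move=> h; elim: k => [|k IH]; first by rewrite /seats_after /= size_nseq.
by rewrite seatsS /divisor_step size_incr_nth IH next_lt.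
Qed.

Lemma bal_step (c : R) v' a' i : i < size v' -> size a' = size v' ->
  next_party c (dup i v') (dup i a') = lft i (next_party c v' a').
Proof.
move=> hi ha.
rewrite (next_partyE2 (f := fun j => (fun j => (nth 0 v' j, ((nth 0 a' j)%:R + c)%R)) (sg i j))); last first.
  by move=> j; rewrite !nth_dup // ha.
rewrite (next_partyE2 (f := fun j => (nth 0 _ j, ((nth 0 _ j)%:R + c)%R)) (fun j => erefl)) size_dup //.
exact: next_bal.
Qed.

Lemma half_step (c : R) v' a' i : (0 <= c)%R -> i < size v' -> size a' = size v' ->
  0 < nth 0 v' i -> next_party c v' a' = i ->
  next_party c (dup i v') (incr_nth (dup i a') i) = i.+1.
Proof.
move=> c0 hi ha vp hn.
pose f' := fun j => (nth 0 v' j, ((nth 0 a' j)%:R + c)%R).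
rewrite (next_partyE2 (f := fun j => if j == i then ((f' i).1, ((f' i).2 + 1)%R) else f' (sg i j))); last first.
  move=> j; rewrite nth_incr_nth !nth_dup ?ha //; case: eqP => [->|/eqP ne].
    rewrite /sg ltnn subn0 eqxx /f' /=; congr pair; rewrite natrD; ring.
  by rewrite eq_sym (negbTE ne).
rewrite size_dup //; apply: next_half => //.
by rewrite /f' /= addr_ge0 // ler0n.
Qed.

Fixpoint Tf (i : nat) (t : nat -> nat) (k : nat) : nat :=
  if k is k'.+1 then Tf i t k' + (if t k' == i then 2 else 1) else 0.

Lemma Tf_prefix i t t' k : (forall j, j < k -> t j = t' j) -> Tf i t k = Tf i t' k.
Proof.
elim: k => // k IH H /=; rewrite IH ?H // => j jk; apply: H; exact: ltnW.
Qed.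

Lemma Tf_cover i t n : exists k, Tf i t k <= n < Tf i t k.+1.
Proof.
have hT m : Tf i t m < Tf i t m.+1 by rewrite [Tf i t m.+1]/=; case: ifP => _; lia.
elim: n => [|n [k /andP[h1 h2]]]; first by exists 0; rewrite (hT 0).
case: (ltnP n.+1 (Tf i t k.+1)) => h.
  by exists k; rewrite h andbT; apply: leq_trans h1 _.
exists k.+1; apply/andP; split; first by [].
have := hT k.+1; lia.
Qed.

Lemma lft_inj i : injective (lft i).
Proof. move=> a b; rewrite /lft; case: (ltnP i a) => ha; case: (ltnP i b) => hb /= ; lia. Qed.

Section Sim2.
Variables (c : R) (v' : seq nat) (i : nat).
Hypotheses (c0 : (0 <= c)%R) (hi : i < size v') (vp : 0 < nth 0 v' i).

Lemma sim k : seats_after c (dup i v') (Tf i (S_seq c v') k) = dup i (seats_after c v' k).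
Proof.
have sv : 0 < size v' by apply: leq_ltn_trans hi.
elim: k => [|k IH].
  rewrite /= /seats_after /=; apply: (@eq_from_nth _ 0).
    by rewrite size_nseq !size_dup ?size_nseq.
  by move=> j _; rewrite nth_dup ?size_nseq // !nth_nseq; case: ifP; case: ifP.
have sA := size_seats c k sv.
rewrite /=; case: eqP => [e|ne].
  rewrite addn2 !seatsS IH /divisor_step bal_step //.
  have e' : next_party c v' (seats_after c v' k) = i := e.
  rewrite e' /lft ltnn addn0 half_step // dup_incr_eq ?sA //.
rewrite addn1 seatsS IH /divisor_step bal_step // dup_incr_ne ?sA ?next_lt //.
by apply/eqP.
Qed.

Lemma S_at k : S_seq c (dup i v') (Tf i (S_seq c v') k) = lft i (S_seq c v' k).
Proof.
have sv : 0 < size v' by apply: leq_ltn_trans hi.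
by rewrite /S_seq sim bal_step // size_seats.
Qed.

Lemma S_at1 k : S_seq c v' k = i -> S_seq c (dup i v') (Tf i (S_seq c v') k).+1 = i.+1.
Proof.
have sv : 0 < size v' by apply: leq_ltn_trans hi.
move=> e; rewrite /S_seq seatsS sim /divisor_step bal_step ?size_seats //.
have e' : next_party c v' (seats_after c v' k) = i := e.
by rewrite e' /lft ltnn addn0 half_step // size_seats.
Qed.
End Sim2.

Lemma S_equiv (c c' : R) v' i : (0 <= c)%R -> (0 <= c')%R -> i < size v' -> 0 < nth 0 v' i ->
  (S_seq c (dup i v') = S_seq c' (dup i v')) <-> (S_seq c v' = S_seq c' v').
Proof.
move=> c0 c'0 hi vp; split => E.
  apply: funext => k; elim/ltn_ind: k => k IHk.
  have hT : Tf i (S_seq c v') k = Tf i (S_seq c' v') k by apply: Tf_prefix.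
  apply: (@lft_inj i).
  by rewrite -(S_at c0 hi vp) -(S_at c'0 hi vp) E hT.
apply: funext => n.
have [k /andP[h1 h2]] := Tf_cover i (S_seq c v') n.
move: h2; rewrite /=.
have A0 := S_at c0 hi vp k; have A0' := S_at c'0 hi vp k; rewrite -E in A0'.
case: eqP => e h2.
  have A1 := S_at1 c0 hi vp e.
  have e' : S_seq c' v' k = i by rewrite -E.
  have A1' := S_at1 c'0 hi vp e'; rewrite -E in A1'.
  have : n = Tf i (S_seq c v') k \/ n = (Tf i (S_seq c v') k).+1 by lia.
  by case=> ->; rewrite ?A0 ?A0' ?A1 ?A1' ?E.
have -> : n = Tf i (S_seq c v') k by lia.
by rewrite A0 A0' E.
Qed.
End Sim.
Lemma geq_tr : transitive geq.
Proof. by move=> a b c h1 h2; apply: leq_trans h2 h1. Qed.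
Lemma gtn_tr : transitive gtn.
Proof. by move=> a b c h1 h2; apply: ltn_trans h2 h1. Qed.

Lemma core (R : realType) (v' : seq nat) i : (i < size v')%N -> all (fun x => 0 < x)%N v' ->
  [set S_seq c (dup i v') | c in [set c : R | (0 <= c <= 1)%R]]
   #= [set S_seq c v' | c in [set c : R | (0 <= c <= 1)%R]].
Proof.
move=> hi hp; apply: card_img_rel => c c' /andP[c0 _] /andP[c'0 _].
apply: S_equiv => //; exact: (all_nthP 0 hp).
Qed.

Lemma dup_decomp (p : seq nat) : sorted geq p -> ~~ uniq p ->
  exists l x r, p = l ++ x :: x :: r.
Proof.
elim: p => // a p IH hs.
have sp : sorted geq p := path_sorted hs.
rewrite /= negb_and negbK => /orP[ap|nu]; last first.
  by have [l [x [r ->]]] := IH sp nu; exists (a :: l), x, r.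
case: p hs ap {IH sp} => // b p hs ap.
move: hs => /= /andP[ab hp].
have hb : all (geq b) p := order_path_min geq_tr hp.
move: ap; rewrite in_cons => /orP[/eqP eab|ap'].
  by exists [::], a, p; rewrite eab.
have ba : (a <= b)%N := (allP hb) a ap'.
have eab : a = b by apply/eqP; rewrite eqn_leq ab ba.
by exists [::], a, p; rewrite eab.
Qed.
Theorem mainTheorem19 (R : realType) (p q : seq nat) :
  sorted geq p -> all (fun x => (0 < x)%N) p ->
  sorted gtn q -> (forall x, (x \in q) = (x \in p)) ->
  [set S_seq c p | c in [set c : R | (0 <= c <= 1)%R]]
    #= [set S_seq c q | c in [set c : R | (0 <= c <= 1)%R]].
Proof.
have [n] := ubnP (size p); elim: n p => // n IH p hsz hs hp hq hmem.
case: (boolP (uniq p)) => hu.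
  suff -> : q = p by [].
  apply: (sorted_eq geq_tr).
  - by move=> a b /andP[h1 h2]; apply/eqP; rewrite eqn_leq; apply/andP.
  - by apply: sub_sorted hq => a b /ltnW.
  - exact: hs.
  apply: uniq_perm => //; apply: (sorted_uniq gtn_tr) => //.
  by move=> a; rewrite /= ltnn.
have [l [x [r ep]]] := dup_decomp hs hu.
pose p' := l ++ x :: r.
have hd : p = dup (size l) p'.
  rewrite /dup /p' take_cat drop_cat ltnn ltnNge leqnSn /= subSnn subnn drop0 /=.
  by rewrite take0 ep -catA.
have hi : (size l < size p')%N by rewrite /p' size_cat /= addnS ltnS leq_addr.
have hp' : all (fun x => (0 < x)%N) p'.
  by move: hp; rewrite ep /p' !all_cat /= => /andP[-> /andP[-> /andP[_ ->]]].
rewrite hd; apply: card_eq_trans (core R hi hp') _.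
apply: IH => //.
- move: hsz; rewrite ep /p' !size_cat /=; lia.
- apply: (subseq_sorted geq_tr _ hs); rewrite ep /p'.
  by rewrite cat_subseq // subseq_cons.
- move=> y; rewrite hmem ep /p' !mem_cat !inE.
  by case: (y == x); rewrite ?orbT.
Qed.
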